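(* Let $\mathcal{H}$ be a complex Hilbert space, let $A\in\mathcal{B}(\mathcal{H})$ be a nonzero positive operator, and let $\mathbb{A}=\begin{pmatrix}A&O\\O&A\end{pmatrix}$ on $\mathcal{H}\oplus\mathcal{H}$. Let $P,Q,R,S\in\mathcal{B}_A(\mathcal{H})$. Then $$\omega_{\mathbb{A}}\left[\begin{pmatrix}P&Q\\R&S\end{pmatrix}\right]\geq\frac12\max\{\mu,\nu\},$$ where $\mu=\max\{\omega_A(Q+R+S+P),\ \omega_A(Q+R-S-P)\}$ and $\nu=\max\{\omega_A(Q-R+i(S+P)),\ \omega_A(Q-R-i(S+P))\}$.
   Context: For a positive operator $A$ on $\mathcal{H}$, $\langle x,y\rangle_A:=\langle Ax,y\rangle$ and $\|x\|_A:=\sqrt{\langle x,x\rangle_A}$. $\mathcal{B}_A(\mathcal{H})$ is the set of $T\in\mathcal{B}(\mathcal{H})$ with $\mathcal{R}(T^*A)\subseteq\mathcal{R}(A)$. $\omega_A(T):=\sup\{|\langle Tx,x\rangle_A|:x\in\mathcal{H},\|x\|_A=1\}$. $\omega_{\mathbb{A}}$ is defined analogously on $\mathcal{H}\oplus\mathcal{H}$ with $\langle (x_1,x_2),(y_1,y_2)\rangle_{\mathbb{A}}=\langle x_1,y_1\rangle_A+\langle x_2,y_2\rangle_A$. *)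

(* Defs.v *)
From HB Require Import structures.
From mathcomp Require Import all_boot all_order all_algebra.
From mathcomp Require Import all_classical all_reals ereal.
From mathcomp Require Export complex.
Set Implicit Arguments. Unset Strict Implicit. Unset Printing Implicit Defensive.
Import Order.TTheory GRing.Theory Num.Theory.
Local Open Scope ring_scope.
Local Open Scope classical_set_scope.

Section Hilbert.
Variables (R : realType) (H : lmodType R[i]).
Implicit Types (ip : H -> H -> R[i]) (T : H -> H).

Definition is_inner_product ip :=
  [/\ forall (a : R[i]) x y z, ip (a *: x + y) z = a * ip x z + ip y z,
      forall x y, ip y x = (ip x y)^*,
      forall x, 0 <= ip x x &
      forall x, ip x x = 0 -> x = 0].

Definition ipnorm ip (x : H) : R := Num.sqrt (complex.Re (ip x x)).

Definition ip_complete ip :=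
  forall u : nat -> H,
    (forall e : R, 0 < e -> exists N, forall m n, (N <= m)%N -> (N <= n)%N ->
        ipnorm ip (u m - u n) < e) ->
    exists l : H, forall e : R, 0 < e -> exists N, forall n, (N <= n)%N ->
        ipnorm ip (u n - l) < e.

Definition is_Hilbert ip := is_inner_product ip /\ ip_complete ip.

Definition bounded_op ip T :=
  (forall (a : R[i]) x y, T (a *: x + y) = a *: T x + T y) /\
  exists M : R, forall x, ipnorm ip (T x) <= M * ipnorm ip x.

Definition positive_op ip T := bounded_op ip T /\ forall x, 0 <= ip (T x) x.

Definition is_adjoint ip T Tadj := forall x y, ip (T x) y = ip x (Tadj y).

(* B_A(H): T in B(H) with R(T^* A) included in R(A) *)
Definition in_BA ip (A T : H -> H) :=
  bounded_op ip T /\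
  exists Tadj, [/\ bounded_op ip Tadj, is_adjoint ip T Tadj &
                   forall x, exists y, Tadj (A x) = A y].

Definition ipA ip (A : H -> H) x y := ip (A x) y.
Definition normA ip (A : H -> H) x : R := Num.sqrt (complex.Re (ipA ip A x x)).

Definition omegaA ip (A T : H -> H) : \bar R :=
  ereal_sup [set (Normc.normc (ipA ip A (T x) x))%:E | x in [set x | normA ip A x = 1]].

Definition ipAA ip (A : H -> H) (x y : H * H) := ipA ip A x.1 y.1 + ipA ip A x.2 y.2.
Definition normAA ip (A : H -> H) (x : H * H) : R :=
  Num.sqrt (complex.Re (ipAA ip A x x)).

Definition block_op (P Q R' S : H -> H) (x : H * H) : H * H :=
  (P x.1 + Q x.2, R' x.1 + S x.2).

Definition omegaAA ip (A : H -> H) (T : H * H -> H * H) : \bar R :=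
  ereal_sup [set (Normc.normc (ipAA ip A (T x) x))%:E |
             x in [set x | normAA ip A x = 1]].

End Hilbert.

(* Main.v *)
Set Warnings "-all".
Require Import Defs.
From HB Require Import structures.
From mathcomp Require Import all_boot all_order all_algebra.
From mathcomp Require Import all_classical all_reals ereal.
From mathcomp Require Import complex.
From mathcomp Require Import ring lra.
Import Order.TTheory GRing.Theory Num.Theory.
Local Open Scope ring_scope.
Section T.
Variable R : realType.
Lemma conji : Num.conj ('i%C : R[i]) = - 'i%C.
Proof. apply/eqP; rewrite eq_complex /=. by rewrite oppr0 !eqxx. Qed.
Lemma normci : Normc.normc ('i%C : R[i]) = 1.
Proof. rewrite /Normc.normc /= expr0n /= add0r expr1n sqrtr1 //. Qed.
Lemma normcN1 : Normc.normc (-1 : R[i]) = 1.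
Proof. by rewrite normcN Normc.normc1. Qed.
Lemma conjr (r : R) : Num.conj ((r%:C)%C) = (r%:C)%C.
Proof. exact: conjc_real. Qed.
Lemma normcr (r : R) : 0 <= r -> Normc.normc ((r%:C)%C) = r.
Proof. move=> hr; rewrite /Normc.normc /= expr0n /= addr0 sqrtr_sqr ger0_norm //. Qed.
Goal forall a b c: R[i], a * Num.conj b + c = c + Num.conj b * a. move=> a b c. ring. Qed.
Variable H : lmodType R[i].
Variable ip : H -> H -> R[i].
Hypothesis lin : forall (a : R[i]) x y z, ip (a *: x + y) z = a * ip x z + ip y z.
Hypothesis sym : forall x y, ip y x = Num.conj (ip x y).
Lemma ip0l z : ip 0 z = 0.
Proof. have := lin 1 0 0 z; rewrite scaler0 addr0 mul1r => h. by apply: (addrI (ip 0 z)); rewrite addr0 -h. Qed.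
Lemma ipZl a x z : ip (a *: x) z = a * ip x z.
Proof. by rewrite -[a *: x]addr0 lin ip0l addr0. Qed.
Lemma ipDl x y z : ip (x + y) z = ip x z + ip y z.
Proof. by rewrite -[x]scale1r lin mul1r scale1r. Qed.
Lemma ipNl x z : ip (- x) z = - ip x z.
Proof. by rewrite -scaleN1r ipZl mulN1r. Qed.
Lemma ipZr a x z : ip z (a *: x) = Num.conj a * ip z x.
Proof. by rewrite sym ipZl rmorphM /= -sym. Qed.
Definition linop (T : H -> H) := forall (a : R[i]) x y, T (a *: x + y) = a *: T x + T y.
Lemma lin0 T : linop T -> T 0 = 0.
Proof. move=> hT; have := hT 1 0 0; rewrite scaler0 addr0 scale1r => h. by apply: (addrI (T 0)); rewrite addr0 -h. Qed.
Lemma linZ T : linop T -> forall a x, T (a *: x) = a *: T x.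
Proof. by move=> hT a x; rewrite -[a *: x]addr0 hT lin0 // addr0. Qed.
Lemma linD T : linop T -> forall x y, T (x + y) = T x + T y.
Proof. by move=> hT x y; rewrite -[x]scale1r hT !scale1r. Qed.
Lemma linN T : linop T -> forall x, T (- x) = - T x.
Proof. by move=> hT x; rewrite -scaleN1r linZ // scaleN1r. Qed.

Arguments lin0 {T}. Arguments linZ {T}. Arguments linD {T}. Arguments linN {T}.
Lemma core (A P Q R' S : H -> H) (s c : R[i]) x :
  linop A -> linop P -> linop Q -> linop R' -> linop S ->
  ipAA ip A (block_op P Q R' S (s *: x, (s * c) *: x)) (s *: x, (s * c) *: x)
  = s * Num.conj s * (ipA ip A (P x) x + c * ipA ip A (Q x) x
     + Num.conj c * ipA ip A (R' x) x + c * Num.conj c * ipA ip A (S x) x).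
Proof.
move=> hA hP hQ hR hS; rewrite /ipAA /ipA /block_op /=.
rewrite (linZ hP) (linZ hQ) (linZ hR) (linZ hS) !(linD hA) !(linZ hA).
rewrite !ipDl !ipZl !ipZr rmorphM /=.
ring.
Qed.

Lemma core2 (A P Q R' S : H -> H) (s c : R[i]) x :
  linop A -> linop P -> linop Q -> linop R' -> linop S -> c * Num.conj c = 1 ->
  ipAA ip A (block_op P Q R' S (s *: x, (s * c) *: x)) (s *: x, (s * c) *: x)
  = s * Num.conj s * (ipA ip A (P x) x + c * ipA ip A (Q x) x
     + Num.conj c * ipA ip A (R' x) x + ipA ip A (S x) x).
Proof. by move=> hA hP hQ hR hS hc; rewrite core // hc mul1r. Qed.

Lemma normAA_eq (A : H -> H) (s c : R[i]) x :
  linop A -> s * Num.conj s = (1/2 : R)%:C%C -> c * Num.conj c = 1 ->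
  normAA ip A (s *: x, (s * c) *: x) = normA ip A x.
Proof.
move=> hA hs hc; rewrite /normAA /normA; congr (Num.sqrt (complex.Re _)).
rewrite /ipAA /ipA /= !(linZ hA) !ipZl !ipZr rmorphM /=.
have -> : s * (Num.conj s * ip (A x) x) + s * c * (Num.conj s * Num.conj c * ip (A x) x)
  = s * Num.conj s * (1 + c * Num.conj c) * ip (A x) x by ring.
rewrite hs hc.
have -> : ((1/2 : R)%:C%C * (1 + 1) : R[i]) = 1.
  rewrite -(rmorph1 (real_complex R)) -rmorphD -rmorphM /=.
  by congr (_%:C)%C; rewrite mul1r mulVf // pnatr_eq0.
by rewrite mul1r.
Qed.

Lemma key (A P Q R' S F : H -> H) (c u : R[i]) :
  linop A -> linop P -> linop Q -> linop R' -> linop S ->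
  c * Num.conj c = 1 -> Normc.normc u = 1 ->
  (forall x, ipA ip A (F x) x * u = ipA ip A (P x) x + c * ipA ip A (Q x) x
     + Num.conj c * ipA ip A (R' x) x + ipA ip A (S x) x) ->
  ((1/2)%:E * omegaA ip A F <= omegaAA ip A (block_op P Q R' S))%E.
Proof.
move=> hA hP hQ hR hS hc hu hF.
set s : R[i] := (Num.sqrt (1/2 : R))%:C%C.
have hs : s * Num.conj s = (1/2 : R)%:C%C.
  rewrite /s conjr -rmorphM /= -expr2 sqr_sqrtr //.
have step : (omegaA ip A F <= 2%:E * omegaAA ip A (block_op P Q R' S))%E.
  apply: ub_ereal_sup => _ [x /= hx <-].
  have hy : normAA ip A (s *: x, (s * c) *: x) = 1 by rewrite normAA_eq.
  have hv : (((1/2) * Normc.normc (ipA ip A (F x) x))%:E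
             <= omegaAA ip A (block_op P Q R' S))%E.
    apply: ereal_sup_ubound; exists (s *: x, (s * c) *: x) => //.
    rewrite core2 // -hF hs !Normc.normcM hu mulr1; congr (_%:E).
    congr (_ * _); rewrite /Normc.normc /= expr0n /= addr0 sqrtr_sqr ger0_norm //.
  have -> : (Normc.normc (ipA ip A (F x) x))%:E
    = (2%:E * ((1/2) * Normc.normc (ipA ip A (F x) x))%:E)%E.
    by rewrite -EFinM mul1r mulrA divff // mul1r.
  by apply: (lee_wpmul2l _ hv); rewrite lee_fin ler0n.
have h12 : (0 <= (1/2 : R)%:E)%E by rewrite lee_fin divr_ge0 // ler0n.
apply: (le_trans (lee_wpmul2l h12 step)).
by rewrite muleA -EFinM mul1r mulVf ?pnatr_eq0 // mul1e.
Qed.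

Lemma ii : ('i%C : R[i]) * 'i%C = -1.
Proof. by rewrite -expr2 sqr_i. Qed.

Lemma alg3 (i q r s p : R[i]) : i * i = -1 ->
  (q - r + i * (s + p)) * (- i) = p + (- i) * q + i * r + s.
Proof.
move=> h; apply/eqP; rewrite -subr_eq0; apply/eqP.
transitivity (- (1 + i * i) * (s + p)); first ring.
by rewrite h addrN oppr0 mul0r.
Qed.

Lemma alg4 (i q r s p : R[i]) : i * i = -1 ->
  (q - r - i * (s + p)) * i = p + i * q + (- i) * r + s.
Proof.
move=> h; apply/eqP; rewrite -subr_eq0; apply/eqP.
transitivity (- (1 + i * i) * (s + p)); first ring.
by rewrite h addrN oppr0 mul0r.
Qed.

Lemma maxe_half (k a b M : \bar R) :
  (k * a <= M)%E -> (k * b <= M)%E -> (k * maxe a b <= M)%E.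
Proof.
by move=> ha hb; have [->|->] : maxe a b = a \/ maxe a b = b
  by rewrite /Order.max; case: ifP; auto.
Qed.

Lemma main_all (A P Q R' S : H -> H) :
  linop A -> linop P -> linop Q -> linop R' -> linop S ->
  let mu := maxe (omegaA ip A (fun x => Q x + R' x + S x + P x))
                 (omegaA ip A (fun x => Q x + R' x - S x - P x)) in
  let nu := maxe (omegaA ip A (fun x => Q x - R' x + 'i%C *: (S x + P x)))
                 (omegaA ip A (fun x => Q x - R' x - 'i%C *: (S x + P x))) in
  ((1/2)%:E * maxe mu nu <= omegaAA ip A (block_op P Q R' S))%E.
Proof.
move=> hA hP hQ hR hS /=.
apply: maxe_half; apply: maxe_half.
- apply: (@key A P Q R' S _ (1) (1)) => //.
  + by rewrite rmorph1 mulr1.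
  + exact: Normc.normc1.
  + move=> x; rewrite /ipA !(linD hA) !ipDl rmorph1; ring.
- apply: (@key A P Q R' S _ (-1) (-1)) => //.
  + by rewrite rmorphN rmorph1 mulrNN mulr1.
  + exact: normcN1.
  + move=> x; rewrite /ipA !(linD hA) !(linN hA) !ipDl !ipNl rmorphN rmorph1; ring.
- apply: (@key A P Q R' S _ (- 'i%C) (- 'i%C)) => //.
  + rewrite raddfN; have := conji; rewrite /= => ->. by rewrite opprK mulNr ii opprK.
  + by rewrite normcN normci.
  + move=> x; rewrite /ipA !(linD hA) !(linN hA) !(linZ hA) !(linD hA) !ipDl !ipNl !ipZl !ipDl.
    rewrite raddfN; have := conji; rewrite /= => ->.
    by rewrite opprK alg3 // ii.
- apply: (@key A P Q R' S _ ('i%C) ('i%C)) => //.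
  + have := conji; rewrite /= => ->.
    by rewrite mulrN ii opprK.
  + exact: normci.
  + move=> x; rewrite /ipA !(linD hA) !(linN hA) !(linZ hA) !(linD hA) !ipDl !ipNl !ipZl !ipDl.
    have := conji; rewrite /= => ->.
    by rewrite alg4 // ii.
Qed.
End T.

Theorem theorem2p22 (R : realType) (H : lmodType R[i]) (ip : H -> H -> R[i])
  (A P Q R' S : H -> H) :
  is_Hilbert ip ->
  positive_op ip A -> (exists x, A x != 0) ->
  in_BA ip A P -> in_BA ip A Q -> in_BA ip A R' -> in_BA ip A S ->
  let mu := maxe (omegaA ip A (fun x => Q x + R' x + S x + P x))
                 (omegaA ip A (fun x => Q x + R' x - S x - P x)) in
  let nu := maxe (omegaA ip A (fun x => Q x - R' x + 'i%C *: (S x + P x)))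
                 (omegaA ip A (fun x => Q x - R' x - 'i%C *: (S x + P x))) in
  ((1/2)%:E * maxe mu nu <= omegaAA ip A (block_op P Q R' S))%E.
Proof.
move=> [[lin sym _ _] _] [[hA _] _] _ [[hP _] _] [[hQ _] _] [[hR _] _] [[hS _] _].
exact: (@main_all R H ip lin sym A P Q R' S hA hP hQ hR hS).
Qed.
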